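(* Let $n$ be a positive integer. Then: (1) For any symmetric bilinear form $S\in \mathcal{S}_n(k)$ there exist units $u_1, \dots, u_n \in k^\times$ such that $S$ is naively homotopic to the diagonal form $\langle u_1,\dots,u_n \rangle$. (2) For any pointed rational function $f\in \mathcal{F}_n(k)$ there exist units $u_1, \dots, u_n \in k^\times$ such that $f$ and $[u_1,\dots,u_n]$ are in the same pointed naive homotopy class.
   Context: Let $k$ be a field. $\mathcal{S}_n$ is the scheme of non-degenerate $n\times n$ symmetric matrices; two elements of $\mathcal{S}_n(k)$ are naively homotopic if they are linked by a finite chain of elements of $\mathcal{S}_n(k[T])$ evaluated at $T=0$ and $T=1$. $\mathcal{F}_n(k)$ is the set of pointed degree $n$ rational functions $\frac AB$ ($A\in k[X]$ monic of degree $n$, $\deg B<n$, $\mathrm{res}_{n,n}(A,B)\neq0$); pointed naive homotopy is the equivalence relation generated by elements of $\mathcal{F}_n(k[T])$ evaluated at $T=0,1$. $\langle u_1,\dots,u_n\rangle$ denotes the diagonal form $\langle u_1\rangle\oplus\dots\oplus\langle u_n\rangle\in\mathcal{S}_n(k)$, and $[u_1,\dots,u_n]$ denotes the rational function $\frac{X}{u_1}\oplus^{\mathrm{N}}\dots\oplus^{\mathrm{N}}\frac{X}{u_n}\in\mathcal{F}_n(k)$, where $\oplus^{\mathrm{N}}$ is defined by: if $A_iU_i+B_iV_i=1$ are Bézout relations ($\deg U_i\leq n_i-2$, $\deg V_i\leq n_i-1$), then $\frac{A_1}{B_1}\oplus^{\mathrm{N}}\frac{A_2}{B_2}=\frac{A_3}{B_3}$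 with $\begin{bmatrix}A_3 & -V_3\\ B_3 & U_3\end{bmatrix} = \begin{bmatrix}A_1 & -V_1\\ B_1 & U_1\end{bmatrix}\begin{bmatrix}A_2 & -V_2\\ B_2 & U_2\end{bmatrix}$. *)

(* Defs.v *)
From HB Require Import structures.
From mathcomp Require Import all_boot all_order all_algebra.
From Stdlib Require Import Relation_Operators.
Set Implicit Arguments. Unset Strict Implicit. Unset Printing Implicit Defensive.
Import GRing.Theory.
Local Open Scope ring_scope.

(* S_n(R) for a commutative ring R: symmetric n x n matrices whose determinant
   is a unit of R.  For R = k a field this is "det <> 0"; for R = k[T] it is
   "det is a nonzero constant". *)
Definition sym_nd (R : comUnitRingType) (n : nat) : pred 'M[R]_n :=
  [pred S | (S^T == S) && (\det S \is a GRing.unit)].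
Arguments sym_nd {R} n.

Definition ev_mx (k : fieldType) (n : nat) (t : k) (H : 'M[{poly k}]_n) : 'M[k]_n :=
  map_mx (fun p : {poly k} => p.[t]) H.

Definition sym_step (k : fieldType) (n : nat) (S1 S2 : 'M[k]_n) : Prop :=
  exists H : 'M[{poly k}]_n, H \in sym_nd n /\ ev_mx 0 H = S1 /\ ev_mx 1 H = S2.

Definition sym_naive_homotopic (k : fieldType) (n : nat) (S1 S2 : 'M[k]_n) : Prop :=
  clos_refl_sym_trans _ (@sym_step k n) S1 S2.

Definition diag_form (k : fieldType) (n : nat) (u : 'I_n -> k) : 'M[k]_n :=
  diag_mx (\row_i u i).

Definition sylvester_nn (R : comUnitRingType) (n : nat) (A B : {poly R}) : 'M[R]_(n + n) :=
  \matrix_(i < n + n, j < n + n)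
     match split i with
     | inl i' => (A * 'X^i')`_j
     | inr i' => (B * 'X^i')`_j
     end.

(* res_{n,n}(A, B) (up to a sign, irrelevant for being a unit) *)
Definition res_nn (R : comUnitRingType) (n : nat) (A B : {poly R}) : R :=
  \det (sylvester_nn n A B).

(* F_n(R): A monic of degree n, deg B < n, res_{n,n}(A,B) a unit.
   A rational function A/B is represented by its pair (A, B). *)
Definition in_Fn (R : comUnitRingType) (n : nat) (f : {poly R} * {poly R}) : Prop :=
  [/\ f.1 \is monic, size f.1 = n.+1, (size f.2 <= n)%N
    & res_nn n f.1 f.2 \is a GRing.unit].
Arguments in_Fn {R} n f.

Definition ev_pair (k : fieldType) (t : k) (f : {poly {poly k}} * {poly {poly k}})
  : {poly k} * {poly k} :=
  (map_poly (fun p : {poly k} => p.[t]) f.1, map_poly (fun p : {poly k} => p.[t]) f.2).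

Definition rf_step (k : fieldType) (n : nat) (f g : {poly k} * {poly k}) : Prop :=
  exists h : {poly {poly k}} * {poly {poly k}}, in_Fn n h /\ ev_pair 0 h = f /\ ev_pair 1 h = g.

Definition rf_naive_homotopic (k : fieldType) (n : nat) (f g : {poly k} * {poly k}) : Prop :=
  clos_refl_sym_trans _ (@rf_step k n) f g.

(* Matrix [A -V; B U] attached to X/u (degree 1): the Bezout relation
   X*U + u*V = 1 with deg U <= -1, deg V <= 0 forces U = 0, V = u^-1. *)
Definition bez_mx_X_over (k : fieldType) (u : k) : 'M[{poly k}]_2 :=
  \matrix_(i < 2, j < 2)
    if (i == 0 :> nat) && (j == 0 :> nat) then 'X
    else if (i == 0 :> nat) then - (u^-1)%:P
    else if (j == 0 :> nat) then u%:P
    else 0.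

(* [u_1,...,u_n] = X/u_1 (+)^N ... (+)^N X/u_n : the first column of the
   product of the Bezout matrices (definition of (+)^N). *)
Definition diag_rf (k : fieldType) (n : nat) (u : 'I_n -> k) : {poly k} * {poly k} :=
  let P := \prod_(i < n) bez_mx_X_over (u i) in
  (P 0 0, P 1 0).

(* Main.v *)
Require Import Defs.
From HB Require Import structures.
From mathcomp Require Import all_boot all_order all_algebra.
From Stdlib Require Import Relation_Operators.
From mathcomp Require Import ring zify.
Set Implicit Arguments. Unset Strict Implicit. Unset Printing Implicit Defensive.
Import GRing.Theory.
Local Open Scope ring_scope.

Section Res.
Variable R : comUnitRingType.

Definition bez (A B : {poly R}) := exists x y, x * A + y * B = 1.

Definition rowpoly n (r : 'rV[R]_n) : {poly R} := \sum_(i < n) r 0 i *: 'X^i.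

Lemma coef_rowpoly n (r : 'rV[R]_n) j :
  (rowpoly r)`_j = if (j < n)%N then \sum_(i < n | val i == j) r 0 i else 0.
Proof.
rewrite /rowpoly coef_sumMXn; case: ifP => // hj.
by apply: big_pred0 => i; apply/negbTE; apply: contraFN hj => /eqP <-.
Qed.

Lemma split_l m n (i : 'I_m) : split (lshift n i) = inl i.
Proof. exact: (unsplitK (inl _ i)). Qed.
Lemma split_r m n (i : 'I_n) : split (rshift m i) = inr i.
Proof. exact: (unsplitK (inr _ i)). Qed.

Lemma syl_row n (A B : {poly R}) (r : 'rV[R]_(n+n)) j :
 (r *m sylvester_nn n A B) 0 j =
 (rowpoly (lsubmx r) * A + rowpoly (rsubmx r) * B)`_j.
Proof.
rewrite mxE big_split_ord coefD /rowpoly !mulr_suml !coef_sum.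
congr (_ + _); apply: eq_bigr => i _; rewrite !mxE ?split_l ?split_r /=.
all: by rewrite -scalerAl coefZ (mulrC (_ ^+ _)).
Qed.

Lemma rowpolyK n (p : {poly R}) : (size p <= n)%N -> rowpoly (\row_(i < n) p`_i) = p.
Proof.
move=> hp; apply/polyP => i; rewrite coef_rowpoly.
case: ifP => hi.
  rewrite (big_pred1 (Ordinal hi)) ?mxE // => l; exact/eqP/eqP.
by apply/esym/(leq_sizeP _ _ hp); rewrite leqNgt hi.
Qed.

Lemma size_rowpoly n (r : 'rV[R]_n) : (size (rowpoly r) <= n)%N.
Proof. by apply/leq_sizeP => j hj; rewrite coef_rowpoly ltnNge hj. Qed.

Lemma res_unit n (A B : {poly R}) : A \is monic -> size A = n.+1 ->
  (size B <= n)%N -> bez A B -> res_nn n A B \is a GRing.unit.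
Proof.
move=> mA sA sB [x [y Hxy]].
have A0 : A != 0 by rewrite -size_poly_gt0 sA.
pose y' (j : nat) := Pdiv.Ring.rmodp ('X^j * y) A.
pose x' (j : nat) := 'X^j * x + Pdiv.Ring.rdivp ('X^j * y) A * B.
have Hxy' j : x' j * A + y' j * B = 'X^j.
  have E := Pdiv.RingMonic.rdivp_eq mA ('X^j * y).
  rewrite /x' /y'; set q := Pdiv.Ring.rdivp _ _; set r := Pdiv.Ring.rmodp _ _.
  have -> : r = 'X^j * y - q * A by rewrite E; ring.
  transitivity ('X^j * (x * A + y * B)); first ring.
  by rewrite Hxy mulr1.
have sy' j : (size (y' j) <= n)%N.
  by rewrite -ltnS -sA Pdiv.Ring.ltn_rmodp.
have sx' (j : 'I_(n + n)) : (size (x' j) <= n)%N.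
  have [->|nz] := eqVneq (x' j) 0; first by rewrite size_poly0.
  have : (size (x' j * A)%R <= n + n)%N.
    have -> : x' j * A = 'X^j - y' j * B by rewrite -(Hxy' j); ring.
    apply: leq_trans (size_polyD _ _) _; rewrite geq_max size_polyXn ltn_ord /=.
    rewrite size_polyN; apply: leq_trans (size_polyMleq _ _) _.
    by apply: leq_trans (leq_pred _) _; apply: leq_add.
  by rewrite size_Mmonic // sA addnS /= leq_add2r.
pose rv (j : 'I_(n + n)) : 'rV[R]_(n + n) :=
  row_mx (\row_(i < n) (x' j)`_i) (\row_(i < n) (y' j)`_i).
have Hrv j j' : (rv j *m sylvester_nn n A B) 0 j' = (j == j')%:R.
  rewrite syl_row /rv row_mxKl row_mxKr !rowpolyK // Hxy' coefXn.
  by rewrite eq_sym.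
pose M := \matrix_(i, j') rv i 0 j'.
have HM : M *m sylvester_nn n A B = 1%:M.
  apply/matrixP => i j'; rewrite !mxE -(Hrv i j') mxE.
  by apply: eq_bigr => l _; rewrite mxE.
apply/unitrPr; exists (\det M).
by rewrite /res_nn mulrC -det_mulmx HM det1.
Qed.

Lemma res_bez n (A B : {poly R}) : A \is monic -> size A = n.+1 ->
  (size B <= n)%N -> res_nn n A B \is a GRing.unit -> bez A B.
Proof.
move=> mA sA sB hu.
case: n sA sB hu => [|n] sA sB hu.
  exists 1, 0; rewrite mul0r addr0 mul1r.
  have := size1_polyC (eq_leq sA) => ->.
  by move: mA; rewrite monicE lead_coefE sA /= => /eqP ->.
rewrite /res_nn in hu; set S := sylvester_nn _ A B in hu.
have Su : S \in unitmx by rewrite unitmxE.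
pose r : 'rV[R]_(n.+1 + n.+1) := delta_mx 0 (Ordinal (ltn0Sn (n + n.+1))) *m invmx S.
exists (rowpoly (lsubmx r)), (rowpoly (rsubmx r)).
apply/polyP => j.
have [hj|hj] := ltnP j (n.+1 + n.+1).
  rewrite -(syl_row A B r (Ordinal hj)) mulmxKV // mxE coefC /=.
  by rewrite -val_eqE /=; case: (j == 0)%N.
rewrite coefC; case: j hj => [//|j] hj /=.
apply: (leq_sizeP _ (n.+1 + n.+1)) => //.
apply: leq_trans (size_polyD _ _) _; rewrite geq_max.
apply/andP; split; apply: leq_trans (size_polyMleq _ _) _; [have := size_rowpoly (lsubmx r) | have := size_rowpoly (rsubmx r)].
by move=> h; rewrite sA addnS /=; apply: leq_add h (leqnn _).
by move=> h; apply: leq_trans (leq_pred _) (leq_add h sB).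
Qed.
End Res.

Definition goodR (R : comUnitRingType) n (f : {poly R} * {poly R}) :=
  [/\ f.1 \is monic, size f.1 = n.+1, (size f.2 <= n)%N & bez f.1 f.2].

Lemma sizeM_le (R : nzRingType) (p q : {poly R}) a b :
  (size p <= a.+1)%N -> (size q <= b.+1)%N -> (size (p * q)%R <= (a + b).+1)%N.
Proof. move=> hp hq; have := size_polyMleq p q; rewrite -subn1; lia. Qed.

Lemma sizeD_le (R : nzRingType) (p q : {poly R}) n :
  (size p <= n)%N -> (size q <= n)%N -> (size (p + q)%R <= n)%N.
Proof. by move=> hp hq; apply: leq_trans (size_polyD _ _) _; rewrite geq_max hp hq. Qed.

Lemma sizeB_le (R : nzRingType) (p q : {poly R}) n :
  (size p <= n)%N -> (size q <= n)%N -> (size (p - q)%R <= n)%N.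
Proof. by move=> hp hq; apply: sizeD_le; rewrite ?size_polyN. Qed.

Lemma monic_add (R : nzRingType) (p q : {poly R}) :
  p \is monic -> (size q < size p)%N -> (p + q \is monic) /\ size (p + q) = size p.
Proof.
move=> mp hq; split; last exact: size_polyDl.
by rewrite monicE lead_coefDl // (monicP mp).
Qed.

Section Ev.
Variable k : fieldType.
Local Notation PP := {poly {poly k}}.
Definition liftp (p : {poly k}) : PP := map_poly polyC p.
Definition TT : PP := ('X : {poly k})%:P.
Definition evp (t : k) (h : PP) : {poly k} := map_poly (horner_eval t) h.

Lemma ev_pairE t h : ev_pair t h = (evp t h.1, evp t h.2).
Proof. by []. Qed.

Lemma evp_lift t p : evp t (liftp p) = p.
Proof.
rewrite /evp /liftp -map_poly_comp map_poly_id // => x _.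
by rewrite /= horner_evalE hornerC.
Qed.

Lemma evp_T t : evp t TT = t%:P.
Proof. by rewrite /evp /TT map_polyC /= horner_evalE hornerX. Qed.

Lemma evp_X t : evp t 'X = 'X.
Proof. by rewrite /evp map_polyX. Qed.

Lemma evpD t p q : evp t (p + q) = evp t p + evp t q. Proof. exact: rmorphD. Qed.
Lemma evpB t p q : evp t (p - q) = evp t p - evp t q. Proof. exact: rmorphB. Qed.
Lemma evpM t p q : evp t (p * q) = evp t p * evp t q. Proof. exact: rmorphM. Qed.
Lemma evpX t p m : evp t (p ^+ m) = evp t p ^+ m. Proof. exact: rmorphXn. Qed.
Lemma evp1 t : evp t 1 = 1. Proof. exact: rmorph1. Qed.
Lemma evpN t p : evp t (- p) = - evp t p. Proof. exact: rmorphN. Qed.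

Lemma size_evp t p : (size (evp t p) <= size p)%N.
Proof. exact: size_poly. Qed.

Lemma good_ev n (t : k) (h : PP * PP) : goodR n h -> goodR n (ev_pair t h).
Proof.
case: h => h1 h2 [/= m1 s1 s2 [x [y Hxy]]].
have l1 : horner_eval t (lead_coef h1) = 1 by rewrite (monicP m1) horner_evalE hornerC.
have l0 : horner_eval t 0 = 0 by rewrite horner_evalE horner0.
rewrite ev_pairE; split => /=.
- by rewrite monicE /evp (lead_coef_map_id0 l0) ?l1 ?oner_eq0.
- by rewrite /evp size_map_poly_id0 ?l1 ?oner_eq0.
- exact: leq_trans (size_evp _ _) s2.
- exists (evp t x), (evp t y); by rewrite -!evpM -evpD Hxy evp1.
Qed.

Lemma good_in n (h : PP * PP) : goodR n h -> in_Fn n h.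
Proof. by case=> m1 s1 s2 hb; split => //; apply: res_unit. Qed.

Lemma step_good n (h : PP * PP) : goodR n h -> rf_step n (ev_pair 0 h) (ev_pair 1 h) /\ goodR n (ev_pair 1 h).
Proof. by move=> g; split; [exists h; split => //; apply: good_in | apply: good_ev]. Qed.

Lemma good_field (R : comUnitRingType) n (f : {poly R} * {poly R}) : in_Fn n f -> goodR n f.
Proof. by case=> m1 s1 s2 hu; split => //; exact: (res_bez m1 s1 s2 hu). Qed.

End Ev.

Definition phiG (R : nzRingType) (c d : R) (f : {poly R} * {poly R}) :=
  ('X * f.1 - c%:P * f.2, d%:P * f.1).

Section Part2.
Variable k : fieldType.
Local Notation PP := {poly {poly k}}.
Local Notation lift := (@liftp k).
Local Notation TT := (@TT k).

Lemma lift_monic p : (lift p \is monic) = (p \is monic).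
Proof. exact: map_monic. Qed.
Lemma size_lift p : size (lift p) = size p.
Proof. exact: size_map_polyC. Qed.
Lemma size_TTM (q : PP) : size (TT * q) = size q.
Proof. by rewrite size_Cmul // polyX_eq0. Qed.
Lemma liftD p q : lift (p + q) = lift p + lift q. Proof. exact: rmorphD. Qed.
Lemma liftB p q : lift (p - q) = lift p - lift q. Proof. exact: rmorphB. Qed.
Lemma liftM p q : lift (p * q) = lift p * lift q. Proof. exact: rmorphM. Qed.
Lemma lift1 : lift 1 = 1. Proof. exact: rmorph1. Qed.

Lemma ev0 (q : {poly k}) : evp 0 TT * q = 0.
Proof. by rewrite evp_T mul0r. Qed.
Lemma ev1 (q : {poly k}) : evp 1 TT * q = q.
Proof. by rewrite evp_T mul1r. Qed.

Lemma stepL n (A B P : {poly k}) : goodR n (A, B) -> (size (P * B)%R <= n)%N ->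
  rf_step n (A, B) (A + P * B, B) /\ goodR n (A + P * B, B).
Proof.
case=> /= mA sA sB [x [y Hxy]] sPB.
pose h := (lift A + TT * lift (P * B), lift B).
have g : goodR n h.
  have [m1 s1] : (lift A + TT * lift (P * B) \is monic) /\
        size (lift A + TT * lift (P * B)) = size (lift A).
    by apply: monic_add; rewrite ?lift_monic // size_TTM !size_lift sA ltnS.
  split => //=; first by rewrite s1 size_lift.
    by rewrite size_lift.
  exists (lift x), (lift y - lift x * TT * lift P).
  transitivity (lift (x * A + y * B)); last by rewrite Hxy lift1.
  rewrite !liftD !liftM; ring.
have [st g1] := step_good g.
have E0 : ev_pair 0 h = (A, B).
  by rewrite ev_pairE /= evpD evpM ev0 !evp_lift addr0.
have E1 : ev_pair 1 h = (A + P * B, B).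
  by rewrite ev_pairE /= evpD evpM ev1 !evp_lift.
by rewrite -E0 -E1.
Qed.

Lemma monic_sub_size (p q : {poly k}) s : p \is monic -> q \is monic ->
  size p = s.+1 -> size q = s.+1 -> (size (p - q)%R <= s)%N.
Proof.
move=> mp mq sp sq; apply/leq_sizeP => j hj; rewrite coefB.
case: (ltngtP j s) => h; first by move: h; rewrite ltnNge hj.
- by rewrite !nth_default ?subr0 // ?sp ?sq.
- have := monicP mp; have := monicP mq; rewrite !lead_coefE sp sq /= h.
  by move=> -> ->; rewrite subrr.
Qed.

Lemma bez_neq0 n (A B : {poly k}) : goodR n.+1 (A, B) -> B != 0.
Proof.
case=> /= mA sA sB [x [y Hxy]]; apply/eqP => B0; move: Hxy; rewrite B0 mulr0 addr0.
move=> H; have := congr1 (fun p : {poly k} => size p) H; rewrite size_poly1.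
have [->|x0] := eqVneq x 0; first by rewrite mul0r size_poly0.
rewrite size_Mmonic // sA addnS /=; move: (size_poly_gt0 x); rewrite x0; by case: (size x) => [|s] //; rewrite addSn addnS.
Qed.

Lemma sizeM2 (R : nzRingType) (p q : {poly R}) a b :
  (size p <= a)%N -> (size q <= b)%N -> (size (p * q)%R <= (a + b).-1)%N.
Proof. move=> hp hq; have := size_polyMleq p q; rewrite -!subn1; lia. Qed.

Lemma raise n (A B : {poly k}) : goodR n.+1 (A, B) ->
  exists A' B', rf_naive_homotopic n.+1 (A, B) (A', B') /\
     goodR n.+1 (A', B') /\ size B' = n.+1.
Proof.
move=> g; have B0 := bez_neq0 g.
have g0 := g; case: g => /= mA sA sB hb.
have [hB|hB] := ltnP (size B) n.+1; last first.
  exists A, B; split; first exact: rst_refl.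
  by split => //; apply/eqP; rewrite eqn_leq sB hB.
set m := (size B).-1.
have sBm : size B = m.+1 by rewrite /m prednK // size_poly_gt0.
have [e en] : exists e, n = (e + m).+1.
  by exists (n - m.+1)%N; move: hB; rewrite sBm; lia.
set b := lead_coef B.
have b0 : b != 0 by rewrite lead_coef_eq0.
set c := b^-1.
have cb : c * b = 1 by rewrite mulVf.
set al := c *: B.
have mal : al \is monic by rewrite monicE lead_coefZ cb.
have sal : size al = m.+1 by rewrite size_scale ?invr_eq0.
have al0 : al != 0 by rewrite -size_poly_gt0 sal.
have hBal : B = b%:P * al by rewrite /al mul_polyC scalerA mulrC cb scale1r.
set Q := A %/ al.
set be := A %% al.
have hA : A = Q * al + be := divp_eq A al.
have sbe : (size be <= m)%N by rewrite -ltnS -sal ltn_modp.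
set A1 := 'X^(e.+2) * al + be.
have [mA1 sA1] : A1 \is monic /\ size A1 = n.+2.
  have mX : 'X^(e.+2) * al \is monic by rewrite monicMl ?monicXn.
  have sX : size ('X^(e.+2) * al) = n.+2.
    by rewrite size_monicM ?monicXn // size_polyXn sal en; lia.
  have sbX : (size be < size ('X^(e.+2) * al)%R)%N by apply: leq_ltn_trans sbe _; rewrite sX en; lia.
  have [m1 s1] := monic_add mX sbX.
  by rewrite -sX; split => //; rewrite s1.
set P := c%:P * ('X^(e.+2) - Q).
have hPB : A + P * B = A1.
  rewrite /P /A1 {1}hA hBal.
  transitivity (Q * al + be + (c%:P * b%:P) * ('X^(e.+2) - Q) * al); first ring.
  by rewrite -polyCM cb; ring.
have sPB : (size (P * B)%R <= n.+1)%N.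
  have -> : P * B = A1 - A by rewrite -hPB; ring.
  exact: monic_sub_size.
have [st1 g1] := stepL g0 sPB; rewrite hPB in st1 g1.
pose Y := lift 'X; pose Z := lift ('X^e); pose a := lift al; pose bb := lift be.
pose C := lift c%:P; pose Bc := lift b%:P.
pose K11 := Y * Y * Z; pose K12 := 1 - TT * C * Y * Z.
pose K21 := Bc + TT * Y * Z; pose K22 := - (TT * TT * C * Z).
pose h := (K11 * a + K12 * bb, K21 * a + K22 * bb).
have CBc : C * Bc = 1 by rewrite /C /Bc -liftM -polyCM cb lift1.
have Hdet : K11 * K22 - K12 * K21 = - Bc.
  transitivity (- Bc + TT * Y * Z * (C * Bc - 1)); first by rewrite /K11 /K12 /K21 /K22; ring.
  by rewrite CBc subrr mulr0 addr0.
have lA1 : lift A1 = K11 * a + bb.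
  by rewrite /A1 liftD liftM /K11 /Y /Z /a /bb !exprS -!liftM; congr (lift _ + _); ring.
have lB : lift B = Bc * a by rewrite hBal liftM.
have eX : 'X * 'X * 'X^e = 'X^(e.+2) :> {poly k} by rewrite !exprS !mulrA.
have eK11a : K11 * a = lift ('X^(e.+2) * al) by rewrite -eX !liftM.
have eK12 : K12 = 1 - TT * lift (c%:P * 'X * 'X^e) by rewrite !liftM /K12 /C /Y /Z; ring.
have eK21 : K21 = lift b%:P + TT * lift ('X * 'X^e) by rewrite !liftM /K21 /Bc /Y /Z; ring.
have eK22 : K22 = - (TT * (TT * lift (c%:P * 'X^e))) by rewrite !liftM /K22 /C /Z; ring.
have sC (r : k) : (size r%:P <= 1)%N := size_polyC_leq1 r.
have sXe : (size ('X^e : {poly k}) <= e.+1)%N by rewrite size_polyXn.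
have sX1 : (size ('X : {poly k}) <= 2)%N by rewrite size_polyX.
have sK12 : (size K12 <= e.+2)%N.
  rewrite eK12; apply: sizeB_le; first by rewrite size_poly1.
  rewrite size_TTM size_lift.
  by have := sizeM2 (sizeM2 (sC c) sX1) sXe.
have sK21 : (size K21 <= e.+2)%N.
  rewrite eK21; apply: sizeD_le; first by rewrite size_lift (leq_trans (sC b)).
  rewrite size_TTM size_lift.
  by have := sizeM2 sX1 sXe.
have sK22 : (size K22 <= e.+1)%N.
  rewrite eK22 size_polyN !size_TTM size_lift.
  by have := sizeM2 (sC c) sXe.
have sbb : (size bb <= m)%N by rewrite size_lift.
have sa : (size a <= m.+1)%N by rewrite size_lift sal.
have gh : goodR n.+1 h.
  have mK : K11 * a \is monic by rewrite eK11a lift_monic monicMl ?monicXn.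
  have sK : size (K11 * a) = n.+2.
    by rewrite eK11a size_lift size_monicM ?monicXn // size_polyXn sal en; lia.
  have s2 : (size (K12 * bb)%R < size (K11 * a)%R)%N.
    by apply: leq_ltn_trans (sizeM2 sK12 sbb) _; rewrite sK en; lia.
  have [m1 s1] := monic_add mK s2.
  split => //=; first by rewrite s1.
    apply: sizeD_le.
      by apply: leq_trans (sizeM2 sK21 sa) _; rewrite en; lia.
    by apply: leq_trans (sizeM2 sK22 sbb) _; rewrite en; lia.
  case: g1 => _ _ _ [x [y Hxy]].
  pose p := lift x * K11 + lift y * Bc; pose q := lift x.
  have E1 : p * a + q * bb = 1.
    by rewrite -lift1 -Hxy liftD !liftM lA1 lB /p /q; ring.
  exists (- C * (p * K22 - q * K21)), (- C * (q * K11 - p * K12)).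
  transitivity (- C * (K11 * K22 - K12 * K21) * (p * a + q * bb)); first ring.
  by rewrite Hdet E1 mulr1 mulrNN CBc.
have [st2 g2] := step_good gh.
have Eh0 : ev_pair 0 h = (A1, B).
  rewrite ev_pairE /h /= eK11a eK12 eK21 eK22.
  rewrite !(evpD, evpB, evpN, evpM, evp1, evp_lift, evp_T, polyC0, mul0r, mulr0, subr0, mul1r, oppr0, addr0).
  by rewrite hBal.
rewrite Eh0 in st2.
set A2 := (ev_pair 1 h).1 in st2 g2 *.
set B2 := (ev_pair 1 h).2 in st2 g2 *.
have eB2 : B2 = b%:P * al + 'X^(e.+1) * al - c%:P * ('X^e * be).
  rewrite /B2 ev_pairE /h /= eK21 eK22.
  rewrite !(evpD, evpB, evpN, evpM, evp1, evp_lift, evp_T, polyC1, mul1r).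
  by rewrite exprS; ring.
exists A2, B2; split.
  by apply: (@rst_trans _ _ _ (A1, B)); apply: rst_step.
split => //.
case: g2 => _ _ /= sB2 _.
apply/eqP; rewrite eqn_leq sB2 /=.
have cf : B2`_n = 1.
  rewrite eB2 coefB coefD !coefCM coefXnM (nth_default 0 (_ : size al <= n)%N); last by rewrite sal en; lia.
  rewrite coefXnM ltnNge (_ : e.+1 <= n)%N ?en /=; last by lia.
  rewrite ltnNge (_ : e <= (e + m).+1)%N /=; last by lia.
  rewrite (nth_default 0 (_ : size be <= (e + m).+1 - e)%N); last by apply: leq_trans sbe _; lia.
  rewrite (_ : ((e + m).+1 - e.+1 = m)%N); last by lia.
  by have := monicP mal; rewrite lead_coefE sal /= => ->; rewrite !mulr0 subr0 add0r.
rewrite ltnNge; apply/negP => hs.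
by move: cf; rewrite nth_default // => /eqP; rewrite eq_sym oner_eq0.
Qed.

Lemma decomp n (A B : {poly k}) : goodR n.+1 (A, B) -> size B = n.+1 ->
  exists u E F, [/\ u != 0, goodR n (E, F) &
     rf_naive_homotopic n.+1 (A, B) (phiG u^-1 u (E, F))].
Proof.
move=> g sB; have B0 := bez_neq0 g.
set u := lead_coef B.
have u0 : u != 0 by rewrite lead_coef_eq0.
set E := u^-1 *: B.
have mE : E \is monic by rewrite monicE lead_coefZ mulVf.
have sE : size E = n.+1 by rewrite size_scale ?invr_eq0.
set cc := (('X * E)`_n - A`_n) / u.
have sPB : (size (cc%:P * B)%R <= n.+1)%N by rewrite mul_polyC (leq_trans (size_scale_leq _ _)) ?sB.
have [st g1] := stepL g sPB.
set A3 := A + cc%:P * B in st g1.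
set F := u%:P * ('X * E - A3).
exists u, E, F.
have hB : B = u%:P * E by rewrite /E mul_polyC scalerA mulfV // scale1r.
have hA3 : A3 = 'X * E - (u^-1)%:P * F.
  rewrite /F mulrA -polyCM mulVf // mul1r; ring.
have hphi : phiG u^-1 u (E, F) = (A3, B) by rewrite /phiG /= -hA3 -hB.
case: g1 => /= mA3 sA3 _ [x [y Hxy]].
case: g => /= mA sA _ _.
split => //; last by rewrite hphi; apply: rst_step.
split => //=.
  apply/leq_sizeP => j hj; rewrite /F coefCM coefB; apply/eqP; rewrite mulf_eq0 subr_eq0.
  apply/orP; right; apply/eqP; rewrite /A3 coefD coefCM.
  have [->|hjn] := eqVneq j n.
    have Bn : B`_n = u by rewrite /u lead_coefE sB.
    by rewrite Bn /cc divfK // addrC subrK.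
  have hj1 : (n < j)%N by rewrite ltn_neqAle eq_sym hjn hj.
  rewrite coefXM (nth_default 0 (_ : size B <= j)%N) ?sB // mulr0 addr0.
  case: j hj hjn hj1 => // j _ _ hj1 /=.
  have [->|hjn'] := eqVneq j n.
    have := monicP mE; rewrite lead_coefE sE /= => ->.
    by have := monicP mA; rewrite lead_coefE sA /= => ->.
  rewrite !nth_default // ?sE ?sA //; move: hjn' => /eqP; lia.
exists (x * 'X + y * u%:P), (- x * (u^-1)%:P).
by rewrite -Hxy hA3 hB; ring.
Qed.

Lemma good_phi (R : comUnitRingType) n (c d : R) f : c * d = 1 ->
  goodR n f -> goodR n.+1 (phiG c d f).
Proof.
case: f => E F cd [/= mE sE sF [x [y Hxy]]].
have E0 : E != 0 by rewrite -size_poly_gt0 sE.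
have mX : 'X * E \is monic by rewrite monicMl ?monicX.
have sX : size ('X * E) = n.+2 by rewrite size_monicM ?monicX // size_polyX sE.
have s2 : (size (c%:P * F)%R < size ('X * E)%R)%N.
  by rewrite sX; apply: leq_ltn_trans (sizeM2 (size_polyC_leq1 c) sF) _.
have s2' : (size (- (c%:P * F))%R < size ('X * E)%R)%N by rewrite size_polyN.
have [m1 s1] := monic_add mX s2'.
split => //=; first by rewrite s1.
  exact: sizeM2 (size_polyC_leq1 d) (eq_leq sE).
exists (- y * d%:P), (x * c%:P + y * 'X).
transitivity ((c%:P * d%:P) * (x * E + y * F)); first ring.
by rewrite -polyCM cd mul1r Hxy.
Qed.

Lemma evpC t (q : {poly k}) : evp t q%:P = (q.[t])%:P.
Proof. by rewrite /evp map_polyC. Qed.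

Lemma phi_step n (u : k) g g' : u != 0 -> rf_step n g g' ->
  rf_step n.+1 (phiG u^-1 u g) (phiG u^-1 u g').
Proof.
move=> u0 [h [hF [<- <-]]].
have gh := good_field hF.
have cd : (u^-1)%:P * u%:P = 1 :> {poly k} by rewrite -polyCM mulVf.
have [st _] := step_good (good_phi cd gh).
have E t : ev_pair t (phiG (u^-1)%:P u%:P h) = phiG u^-1 u (ev_pair t h).
  by rewrite !ev_pairE /phiG /= evpB !evpM evp_X !evpC !hornerC.
by rewrite -!E.
Qed.

Lemma phi_hom n (u : k) g g' : u != 0 -> rf_naive_homotopic n g g' ->
  rf_naive_homotopic n.+1 (phiG u^-1 u g) (phiG u^-1 u g').
Proof.
move=> u0; elim => [x y s|x|x y _ IH|x y z _ IH1 _ IH2].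
- by apply: rst_step; apply: phi_step.
- exact: rst_refl.
- exact: rst_sym.
- exact: rst_trans IH1 IH2.
Qed.

Lemma diag_rf_ext n (u v : 'I_n -> k) : (forall i, u i = v i) -> diag_rf u = diag_rf v.
Proof. by move=> e; rewrite /diag_rf (eq_bigr _ (fun i _ => congr1 _ (e i))). Qed.

Lemma diag_rf_S n (u : 'I_n.+1 -> k) :
  diag_rf u = phiG (u ord0)^-1 (u ord0) (diag_rf (fun i => u (fintype.lift ord0 i))).
Proof.
rewrite /diag_rf big_ord_recl /phiG /=.
set P := \prod_(i < n) _.
rewrite -mulmxE !mxE !big_ord_recl big_ord0 !mxE /=.
have l1 : fintype.lift ord0 ord0 = 1 :> 'I_2 by apply/val_inj.
have l0 : ord0 = 0 :> 'I_2 by apply/val_inj.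
rewrite big_ord0 l1 l0; congr (_, _); rewrite /bump /=; ring.
Qed.
End Part2.

Theorem part2 (k : fieldType) n (f : {poly k} * {poly k}) : goodR n f ->
  exists u : 'I_n -> k, (forall i, u i != 0) /\ rf_naive_homotopic n f (diag_rf u).
Proof.
elim: n f => [|n IH] [A B] g.
  exists (fun _ => 1); split => [i|]; first exact: oner_neq0.
  have -> : (A, B) = diag_rf (fun _ : 'I_0 => (1 : k)).
    case: g => /= mA sA sB _; rewrite /diag_rf big_ord0 !mxE /=.
    move: sB; rewrite size_poly_leq0 => /eqP ->.
    have := size1_polyC (eq_leq sA) => ->.
    by move: mA; rewrite monicE lead_coefE sA /= => /eqP ->.
  exact: rst_refl.
have [A' [B' [h1 [g' sB']]]] := raise g.
have [u [E [F [u0 gEF h2]]]] := decomp g' sB'.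
have [u' [u0' h3]] := IH _ gEF.
pose U (i : 'I_n.+1) := if unlift ord0 i is Some j then u' j else u.
exists U; split.
  by move=> i; rewrite /U; case: unlift.
rewrite diag_rf_S (@diag_rf_ext _ _ _ u'); last by move=> i; rewrite /U liftK.
have -> : U ord0 = u by rewrite /U unlift_none.
apply: (rst_trans _ _ _ _ _ h1); apply: (rst_trans _ _ _ _ _ h2); exact: phi_hom.
Qed.

Section Sym.
Variable k : fieldType.

Lemma evmxE n t (A : 'M[{poly k}]_n) : ev_mx t A = map_mx (horner_eval t) A.
Proof. by []. Qed.

Lemma ev_liftmx n t (S : 'M[k]_n) : ev_mx t (map_mx polyC S) = S.
Proof. by apply/matrixP => i j; rewrite !mxE hornerC. Qed.

Lemma polyC_unitP (c : k) : c != 0 -> c%:P \is a GRing.unit.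
Proof. by move=> c0; rewrite poly_unitE size_polyC c0 coefC /= unitfE. Qed.

Lemma sym_ndP n (S : 'M[k]_n) : S \in sym_nd n <-> S^T = S /\ \det S != 0.
Proof.
rewrite inE unitfE; split; first by case/andP => /eqP.
by case=> -> ->; rewrite eqxx.
Qed.

Lemma sym_congr n (S Q : 'M[k]_n) : S \in sym_nd n -> \det Q != 0 ->
  Q^T *m S *m Q \in sym_nd n.
Proof.
move=> /sym_ndP [sS dS] dQ; apply/sym_ndP; split.
  by rewrite !trmx_mul trmxK sS mulmxA.
by rewrite !det_mulmx det_tr !mulf_neq0.
Qed.

Lemma cong_step n (S : 'M[k]_n) (P : 'M[{poly k}]_n) : S \in sym_nd n ->
  \det P = 1 -> ev_mx 0 P = 1%:M ->
  sym_step S ((ev_mx 1 P)^T *m S *m ev_mx 1 P).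
Proof.
move=> hS dP e0; have /sym_ndP [sS dS] := hS.
exists (P^T *m map_mx polyC S *m P); split.
  rewrite inE; apply/andP; split.
    by rewrite !trmx_mul trmxK map_trmx sS mulmxA.
  rewrite !det_mulmx det_tr dP mulr1 mul1r.
  have -> : \det (map_mx polyC S) = (\det S)%:P by exact: (det_map_mx polyC).
  exact: polyC_unitP.
rewrite !evmxE !map_mxM -!map_trmx -!evmxE !ev_liftmx.
split => //; by rewrite e0 trmx1 mul1mx mulmx1.
Qed.

Lemma ev_Xscale n m t (q : 'M[k]_(n, m)) :
  map_mx (horner_eval t) ('X *: map_mx polyC q) = t *: q.
Proof. by apply/matrixP => i j; rewrite !mxE /horner_eval mulrC hornerCM hornerX mulrC. Qed.

Lemma ev_C0 n m t : map_mx (horner_eval t) (0 : 'M[{poly k}]_(n, m)) = 0.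
Proof. by apply/matrixP => i j; rewrite !mxE /horner_eval horner0. Qed.

Lemma ev_C1 n t : map_mx (horner_eval t) (1%:M : 'M[{poly k}]_n) = 1%:M.
Proof. by apply/matrixP => i j; rewrite !mxE /horner_eval; case: (i == j); rewrite /= ?hornerC ?horner0. Qed.

Lemma cong_lower n (S : 'M[k]_(1 + n)) (q : 'M[k]_(n, 1)) : S \in sym_nd (1 + n) ->
  sym_step S ((block_mx 1%:M 0 q 1%:M)^T *m S *m block_mx 1%:M 0 q 1%:M).
Proof.
move=> hS.
have E t : ev_mx t (block_mx 1%:M 0 ('X *: map_mx polyC q) 1%:M) = block_mx 1%:M 0 (t *: q) 1%:M.
  by rewrite evmxE map_block_mx ev_Xscale ev_C0 !ev_C1.
have := cong_step hS (P := block_mx 1%:M 0 ('X *: map_mx polyC q) 1%:M).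
rewrite !E scale0r scale1r -scalar_mx_block det_lblock !det1 mulr1; exact.
Qed.

Lemma cong_upper n (S : 'M[k]_(1 + n)) (r : 'M[k]_(1, n)) : S \in sym_nd (1 + n) ->
  sym_step S ((block_mx 1%:M r 0 1%:M)^T *m S *m block_mx 1%:M r 0 1%:M).
Proof.
move=> hS.
have E t : ev_mx t (block_mx 1%:M ('X *: map_mx polyC r) 0 1%:M) = block_mx 1%:M (t *: r) 0 1%:M.
  by rewrite evmxE map_block_mx ev_Xscale ev_C0 !ev_C1.
have := cong_step hS (P := block_mx 1%:M ('X *: map_mx polyC r) 0 1%:M).
rewrite !E scale0r scale1r -scalar_mx_block det_ublock !det1 mulr1; exact.
Qed.

Lemma blk_sym n (s : k) (M : 'M[k]_n) :
  block_mx s%:M 0 0 M \in sym_nd (1 + n) -> s != 0 /\ M \in sym_nd n.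
Proof.
move=> /sym_ndP [hs hd]; move: hd; rewrite det_ublock det_scalar1 mulf_eq0 negb_or.
case/andP=> s0 dM; split => //; apply/sym_ndP; split => //.
move: hs; rewrite tr_block_mx !trmx0 tr_scalar_mx.
by case/eq_block_mx.
Qed.

Lemma sym_parts n (S : 'M[k]_(1 + n)) : S^T = S ->
  [/\ (ursubmx S)^T = dlsubmx S, (dlsubmx S)^T = ursubmx S,
      (ulsubmx S)^T = ulsubmx S & (drsubmx S)^T = drsubmx S].
Proof.
move=> hS; have := hS; rewrite -{1 2}[S]submxK tr_block_mx.
by case/eq_block_mx => -> -> -> ->.
Qed.

Lemma trail_pivot n (S : 'M[k]_(1 + n)) : S \in sym_nd (1 + n) ->
  drsubmx S \in unitmx ->
  exists s M', [/\ s != 0, M' \in sym_nd n &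
                  sym_naive_homotopic S (block_mx s%:M 0 0 M')].
Proof.
move=> hS uM; have /sym_ndP [sS dS] := hS.
have [hr hl ha hM] := sym_parts sS.
set a := ulsubmx S in ha *; set r := ursubmx S in hr hl *;
set l := dlsubmx S in hr hl *; set M := drsubmx S in hM uM *.
pose q := - (invmx M *m l).
have st := cong_lower q hS.
have eR : (block_mx 1%:M 0 q 1%:M)^T *m S *m block_mx 1%:M 0 q 1%:M =
          block_mx (a + q^T *m l) 0 0 M.
  rewrite -[S]submxK -/a -/r -/l -/M tr_block_mx !trmx1 !trmx0 !mulmx_block.
  rewrite !mul1mx !mul0mx !mulmx0 !mulmx1 ?addr0 ?add0r.
  have e1 : r + q^T *m M = 0.
    by rewrite /q linearN /= trmx_mul trmx_inv hM hl mulNmx -mulmxA mulVmx // mulmx1 addrN.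
  have e2 : l + M *m q = 0.
    by rewrite /q mulmxN mulmxA mulmxV // mul1mx subrr.
  by rewrite e1 e2 mul0mx addr0.
have dQ : \det (block_mx 1%:M 0 q 1%:M) != 0 by rewrite det_lblock !det1 mulr1 oner_eq0.
have hR := sym_congr hS dQ; rewrite eR in hR st.
rewrite [a + _]mx11_scalar in hR st.
have [s0 hM'] := blk_sym hR.
by exists ((a + q^T *m l) 0 0), M; split => //; apply: rst_step.
Qed.

Lemma lead_pivot n (S : 'M[k]_(1 + n)) : S \in sym_nd (1 + n) ->
  ulsubmx S \in unitmx ->
  exists s M', [/\ s != 0, M' \in sym_nd n &
                  sym_naive_homotopic S (block_mx s%:M 0 0 M')].
Proof.
move=> hS ua; have /sym_ndP [sS dS] := hS.
have [hr hl ha hM] := sym_parts sS.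
set a := ulsubmx S in ha ua *; set r := ursubmx S in hr hl *;
set l := dlsubmx S in hr hl *; set M := drsubmx S in hM *.
pose p := - (invmx a *m r).
have st := cong_upper p hS.
have eR : (block_mx 1%:M p 0 1%:M)^T *m S *m block_mx 1%:M p 0 1%:M =
          block_mx a 0 0 (M + p^T *m r).
  rewrite -[S]submxK -/a -/r -/l -/M tr_block_mx !trmx1 !trmx0 !mulmx_block.
  rewrite !mul1mx !mul0mx !mulmx0 !mulmx1 ?addr0 ?add0r.
  have e1 : a *m p + r = 0.
    by rewrite /p mulmxN mulmxA mulmxV // mul1mx addrC addrN.
  have e2 : p^T *m a + l = 0.
    by rewrite /p linearN /= trmx_mul trmx_inv ha hr mulNmx -mulmxA mulVmx // mulmx1 addrC addrN.
  rewrite e2 e1 mul0mx ?add0r ?addr0.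
  by rewrite addrC.
have dQ : \det (block_mx 1%:M p 0 1%:M) != 0 by rewrite det_ublock !det1 mulr1 oner_eq0.
have hR := sym_congr hS dQ; rewrite eR in hR st.
rewrite [a]mx11_scalar in hR st.
have [s0 hM'] := blk_sym hR.
by exists (a 0 0), (M + p^T *m r); split => //; apply: rst_step.
Qed.

Lemma row'col'0 n (S : 'M[k]_(1 + n)) : row' 0 (col' 0 S) = drsubmx S.
Proof. by apply/matrixP => i j; rewrite !mxE; congr (S _ _); apply/val_inj. Qed.

Lemma add_trick n (S : 'M[k]_(1 + n)) (c : k) : S \in sym_nd (1 + n) ->
  \det (drsubmx S) = 0 -> sym_step S (S + c *: delta_mx 0 0).
Proof.
move=> hS dM; have /sym_ndP [sS dS] := hS.
pose D : 'M[k]_(1 + n) := c *: delta_mx 0 0.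
pose H := map_mx polyC S + 'X *: map_mx polyC D.
have E t : ev_mx t H = S + t *: D.
  by rewrite evmxE map_mxD -evmxE ev_liftmx ev_Xscale.
exists H; split; last by rewrite !E scale0r addr0 scale1r.
rewrite inE; apply/andP; split.
  by rewrite /H linearD linearZ /= !map_trmx sS /D linearZ /= trmx_delta.
have cofE j : cofactor H 0 j = cofactor (map_mx polyC S) 0 j.
  rewrite /cofactor; congr (_ * \det _); apply/matrixP => i j'; rewrite !mxE.
  by rewrite eq_sym (negbTE (neq_lift _ _)) /= mulr0 polyC0 mulr0 addr0.
have -> : \det H = (\det S)%:P.
  rewrite (expand_det_row H 0).
  under eq_bigr => j _ do rewrite cofE !mxE.
  rewrite big_ord_recl.
  have z0 : (0 : 'I_(1 + n)) = ord0 by apply/val_inj.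
  have hl i : (lift ord0 i == ord0 :> 'I_(1 + n)) = false.
    by apply/negbTE; rewrite eq_sym neq_lift.
  have cof0 : cofactor (map_mx polyC S) 0 ord0 = 0.
    rewrite cofactor_map_mx /cofactor z0 row'col'0 dM mulr0.
    exact: polyC0.
  rewrite z0 cof0 mulr0 add0r.
  under eq_bigr => i _ do rewrite hl andbF mulr0 polyC0 mulr0 addr0.
  rewrite -(det_map_mx polyC) (expand_det_row _ ord0) big_ord_recl -z0 cof0 mulr0 add0r.
  by apply: eq_bigr => i _; rewrite !mxE.
exact: polyC_unitP.
Qed.

Lemma step_sym n (S1 S2 : 'M[k]_n) : sym_step S1 S2 -> S2 \in sym_nd n.
Proof.
case=> H [hH [_ <-]]; move: hH; rewrite inE => /andP [/eqP sH dH].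
apply/sym_ndP; split; first by rewrite evmxE map_trmx sH.
rewrite evmxE (det_map_mx (horner_eval 1)).
move: dH; rewrite poly_unitE => /andP [/eqP s1 u0].
rewrite [\det H]size1_polyC ?s1 //. change (((\det H)`_0)%:P.[1] != 0). by rewrite hornerC -unitfE.
Qed.

Lemma sym_core n (S : 'M[k]_(1 + n)) : S \in sym_nd (1 + n) ->
  exists s M', [/\ s != 0, M' \in sym_nd n &
                  sym_naive_homotopic S (block_mx s%:M 0 0 M')].
Proof.
move=> hS; have [dM|dM] := eqVneq (\det (drsubmx S)) 0; last first.
  by apply: trail_pivot => //; rewrite unitmxE unitfE.
have st := add_trick (1 - S 0 0) hS dM.
have hS' := step_sym st.
have [s [M' [s0 hM' h]]] : exists s M', [/\ s != 0, M' \in sym_nd n &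
      sym_naive_homotopic (S + (1 - S 0 0) *: delta_mx 0 0) (block_mx s%:M 0 0 M')].
  apply: lead_pivot => //.
  rewrite unitmxE unitfE det_mx11 !mxE.
  have -> : lshift n (0 : 'I_1) = 0 by apply/val_inj.
  by rewrite !eqxx mulr1 addrC subrK oner_eq0.
exists s, M'; split => //.
by apply: (@rst_trans _ _ _ (S + (1 - S 0 0) *: delta_mx 0 0)); first exact: rst_step.
Qed.

Lemma ev_scal t (s : k) m : map_mx (horner_eval t) ((s%:P)%:M : 'M_m) = s%:M.
Proof.
apply/matrixP => i j; rewrite !mxE /horner_eval.
by case: (i == j); rewrite /= ?mulr1n ?mulr0n ?hornerC ?horner0.
Qed.

Lemma blk_step n (s : k) (M1 M2 : 'M[k]_n) : s != 0 -> sym_step M1 M2 ->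
  sym_step (block_mx s%:M 0 0 M1 : 'M_(1 + n)) (block_mx s%:M 0 0 M2).
Proof.
move=> s0 [H [hH [e0 e1]]]; move: hH; rewrite inE => /andP [/eqP sH dH].
exists (block_mx (s%:P)%:M 0 0 H : 'M_(1 + n)); split.
  rewrite inE; apply/andP; split.
    by rewrite tr_block_mx !trmx0 tr_scalar_mx sH.
  by rewrite det_ublock det_scalar1 unitrM polyC_unitP.
by rewrite !evmxE !map_block_mx !ev_scal !ev_C0 -!evmxE e0 e1.
Qed.

Lemma blk_hom n (s : k) (M1 M2 : 'M[k]_n) : s != 0 -> sym_naive_homotopic M1 M2 ->
  sym_naive_homotopic (block_mx s%:M 0 0 M1 : 'M_(1 + n)) (block_mx s%:M 0 0 M2).
Proof.
move=> s0; elim => [x y st|x|x y _ IH|x y z _ IH1 _ IH2].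
- by apply: rst_step; apply: blk_step.
- exact: rst_refl.
- exact: rst_sym.
- exact: rst_trans IH1 IH2.
Qed.

Lemma diag_form_S n (u : 'I_n -> k) (s : k) :
  diag_form (fun i : 'I_(1 + n) => if unlift ord0 i is Some j then u j else s) =
  block_mx s%:M 0 0 (diag_form u).
Proof.
rewrite /diag_form.
have -> : \row_(i < 1 + n) (if unlift ord0 i is Some j then u j else s) =
          row_mx (\row_(j < 1) s) (\row_j u j).
  apply/matrixP => i j; rewrite mxE -[j]splitK; case: (split j) => j' /=.
    rewrite row_mxEl mxE (ord1 j').
    have -> : lshift n (0 : 'I_1) = ord0 by apply/val_inj.
    by rewrite unlift_none.
  rewrite row_mxEr mxE.
  have -> : rshift 1 j' = lift ord0 j' by apply/val_inj.
  by rewrite liftK.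
rewrite diag_mx_row; congr block_mx.
by apply/matrixP => i j; rewrite !mxE (ord1 i) (ord1 j).
Qed.

End Sym.

Theorem part1 (k : fieldType) n (S : 'M[k]_n) : S \in sym_nd n ->
  exists u : 'I_n -> k, (forall i, u i != 0) /\ sym_naive_homotopic S (diag_form u).
Proof.
elim: n S => [|n IH] S hS.
  exists (fun _ => 1); split => [i|]; first exact: oner_neq0.
  by rewrite (flatmx0 S) (flatmx0 (diag_form _)); apply: rst_refl.
have [s [M' [s0 hM' h]]] := sym_core (hS : S \in sym_nd (1 + n)).
have [u [u0 h2]] := IH M' hM'.
exists (fun i : 'I_(1 + n) => if unlift ord0 i is Some j then u j else s); split.
  by move=> i; case: unlift.
rewrite diag_form_S.
apply: (rst_trans _ _ _ _ _ h); exact: blk_hom.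
Qed.

Theorem lemma3p14 (k : fieldType) (n : nat) (Hn : (0 < n)%N) :
  (forall S : 'M[k]_n, S \in sym_nd n ->
     exists u : 'I_n -> k, (forall i, u i != 0) /\
       sym_naive_homotopic S (diag_form u)) /\
  (forall f : {poly k} * {poly k}, in_Fn n f ->
     exists u : 'I_n -> k, (forall i, u i != 0) /\
       rf_naive_homotopic n f (diag_rf u)).
Proof.
split; first by move=> S hS; exact: part1.
by move=> f hf; apply: part2; apply: good_field.
Qed.
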